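(* Consider the online ADDIS setting described in the context, and assume the predictable sequences satisfy $\tau_j>\lambda_j\ge\alpha_j$ for every $j\in\mathbb N$. (a) If the null $p$-values are conditionally uniformly conservative, then any procedure with $\widehat{\mathrm{FDP}}_{\mathrm{ADDIS}}(t)\le\alpha$ for all $t\in\mathbb N$ (almost surely) satisfies $\mathrm{mFDR}(t)\le\alpha$ for all $t\in\mathbb N$. (b) If in addition the null $p$-values are independent of each other and of the non-null $p$-values, and for every $t$ the quantities $\alpha_t$, $\lambda_t$ and $1-\tau_t$ are monotonic functions of the past, then any procedure with $\widehat{\mathrm{FDP}}_{\mathrm{ADDIS}}(t)\le\alpha$ for all $t\in\mathbb N$ satisfies $\mathrm{FDR}(t)\le\alpha$ for all $t\in\mathbb N$.
   Context: Let $P_1,P_2,\dots$ be $p$-values for hypotheses $H_1,H_2,\dots$, and let $\mathcal H_0\subseteq\mathbb N$ be the (fixed, unknown) set of indices of true null hypotheses. Fix a target level $\alpha\in(0,1)$. An online procedure uses sequences $\{\alpha_j\},\{\lambda_j\},\{\tau_j\}$ with values in $[0,1]$ and defines indicators $S_j=\mathbf 1\{P_j\le\tau_j\}$, $C_j=\mathbf 1\{P_j\le\lambda_j\}$, $R_j=\mathbf 1\{P_j\le\alpha_j\}$ ($H_j$ is rejected iff $R_j=1$), and $R(t)=\{j\le t:R_j=1\}$. Let $\mathcal F^t=\sigma(R_{1:t},C_{1:t},S_{1:t})$ (with $\mathcal F^0$ trivial). The sequences are predictable: $\alpha_t,\lambda_t,\tau_t$ are $\mathcal F^{t-1}$-measurable,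 i.e. deterministic functions of $(R_{1:t-1},C_{1:t-1},S_{1:t-1})$. The null $p$-values are (conditionally) uniformly conservative if for every $t\in\mathcal H_0$ and all $x,\tau\in(0,1)$, $\Pr(P_t/\tau\le x\mid P_t\le\tau,\mathcal F^{t-1})\le x$ (equivalently, the conditional CDF $F$ of $P_t$ given $\mathcal F^{t-1}$ satisfies $F(\tau x)\le xF(\tau)$ for all $x,\tau\in[0,1]$). Define $$\widehat{\mathrm{FDP}}_{\mathrm{ADDIS}}(t)=\frac{\sum_{j\le t}\alpha_j\frac{\mathbf 1\{\lambda_j<P_j\le\tau_j\}}{\tau_j-\lambda_j}}{|R(t)|\vee1},$$ $\mathrm{FDR}(t)=\mathbb E\big[\frac{|\mathcal H_0\cap R(t)|}{|R(t)|\vee1}\big]$ and $\mathrm{mFDR}(t)=\frac{\mathbb E[|\mathcal H_0\cap R(t)|]}{\mathbb E[|R(t)|\vee1]}$. A function $f_t(R_{1:t-1},C_{1:t-1},S_{1:t-1}):\{0,1\}^{3(t-1)}\to[0,1]$ is a monotonic function of the past if it is coordinatewise nondecreasing in each $R_i$ and each $C_i$ and coordinatewise nonincreasing in each $S_i$. *)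

(* Defs.v *)
From HB Require Import structures.
From mathcomp Require Import all_boot all_order all_algebra.
From mathcomp Require Import all_classical all_reals all_analysis.
Set Implicit Arguments.
Unset Strict Implicit.
Unset Printing Implicit Defensive.
Import Order.TTheory GRing.Theory Num.Theory.
Local Open Scope classical_set_scope.
Local Open Scope ring_scope.

(* Hypotheses are indexed 0,1,2,... (paper index j+1).  The "past" before
   hypothesis t is the history of the triples (R_j, C_j, S_j), j < t. *)
Definition hist := seq (bool * bool * bool).

Section ADDIS.
Context {d : measure_display} {T : measurableType d} {R : realType}.
Variables (P : nat -> T -> R) (alpha lambda tau : nat -> hist -> R).

Definition step (t : nat) (h : hist) (w : T) : bool * bool * bool :=
  (P t w <= alpha t h, P t w <= lambda t h, P t w <= tau t h).

Fixpoint history (t : nat) (w : T) : hist :=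
  if t is t'.+1 then rcons (history t' w) (step t' (history t' w) w) else [::].

Definition alpha_at t w := alpha t (history t w).
Definition lambda_at t w := lambda t (history t w).
Definition tau_at t w := tau t (history t w).

Definition rej j w : bool := P j w <= alpha_at j w.

Definition num_rej t w : nat := \sum_(j < t) rej j w.

Definition num_false_rej (null : nat -> bool) t w : nat :=
  \sum_(j < t | null j) rej j w.

Definition FDP_ADDIS t w : R :=
  (\sum_(j < t) alpha_at j w *
      ((if (lambda_at j w < P j w) && (P j w <= tau_at j w) then 1 else 0)
        / (tau_at j w - lambda_at j w)))
  / (maxn (num_rej t w) 1)%:R.

Variable (Pr : probability T R).

Definition FDR null t : \bar R :=
  'E_Pr[fun w => (num_false_rej null t w)%:R / (maxn (num_rej t w) 1)%:R].

Definition mFDR null t : R :=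
  fine ('E_Pr[fun w => (num_false_rej null t w)%:R])
  / fine ('E_Pr[fun w => (maxn (num_rej t w) 1)%:R]).

(* Conditional uniform conservativeness: F^{t} (sigma-algebra of the past)
   is generated by the finite-valued history, so conditioning on it is
   conditioning on the atoms [history t = h]; F(tau x) <= x F(tau) on each
   atom is, after multiplying by Pr(atom), the inequality below. *)
Definition cond_unif_conservative (null : nat -> bool) :=
  forall t, null t -> forall h : hist, size h = t ->
  forall x s : R, 0 < x < 1 -> 0 < s < 1 ->
  (Pr ([set w | (P t w <= s * x)%R] `&` [set w | history t w = h])
   <= x%:E * Pr ([set w | (P t w <= s)%R] `&` [set w | history t w = h]))%E.

(* Null p-values are mutually independent and independent of the
   (joint family of) non-null p-values: product rule over finite families. *)
Definition nulls_independent (null : nat -> bool) :=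
  forall (N M : seq nat) (B : nat -> set R),
  uniq N -> all null N -> all (fun k => ~~ null k) M ->
  (forall j, measurable (B j)) ->
  Pr (\bigcap_(j in [set j | j \in N ++ M]) (P j @^-1` B j)) =
  ((\prod_(j <- N) Pr (P j @^-1` B j)) *
     Pr (\bigcap_(k in [set k | k \in M]) (P k @^-1` B k)))%E.

End ADDIS.

Definition hist_le (h h' : hist) : Prop :=
  size h = size h' /\
  forall i, (i < size h)%N ->
    let: (r, c, s) := nth (false, false, false) h i in
    let: (r', c', s') := nth (false, false, false) h' i in
    [&& r ==> r', c ==> c' & s' ==> s].

Definition monotone_past {R : realType} (f : nat -> hist -> R) : Prop :=
  forall t (h h' : hist), size h = t -> hist_le h h' -> f t h <= f t h'.

(* Main.v *)
Require Import Defs.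
From HB Require Import structures.
From mathcomp Require Import all_boot all_order all_algebra.
From mathcomp Require Import all_classical all_reals all_analysis.
From mathcomp Require Import ring lra measurable_realfun.
Import Order.TTheory GRing.Theory Num.Theory.
Local Open Scope classical_set_scope.
Local Open Scope ring_scope.
Set Implicit Arguments.
Unset Strict Implicit.
Unset Printing Implicit Defensive.

From mathcomp Require Import ring.
Section RealLem.
Context {R : realFieldType}.

Lemma lim_le1 (c y z : R) : 0 <= c < 1 -> 0 <= y ->
  (forall s, c < s < 1 -> s * y <= z) -> y <= z.
Proof.
move=> /andP[c0 c1] y0 H; rewrite leNgt; apply/negP => zy.
have hs : c < (c+1)/2 < 1 by apply/andP; split; lra.
have yp : 0 < y.
  rewrite lt_def y0 andbT; apply/eqP => y00; have := H _ hs.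
  by move: zy; rewrite y00 mulr0; lra.
pose m := Num.max c (z / y).
have zy1 : z / y < 1 by rewrite ltr_pdivrMr // mul1r.
have m1 : m < 1 by rewrite /m gt_max c1 zy1.
have := H ((m + 1) / 2).
have cm : c <= m by rewrite /m le_max lexx.
have zm : z / y <= m by rewrite /m le_max lexx orbT.
have : z <= m * y by rewrite -ler_pdivrMr.
move=> zmy Hs.
have : (m + 1) / 2 * y <= z by apply: Hs; lra.
nra.
Qed.

Lemma lim_le0 (y z : R) : 0 <= z -> (forall x, 0 < x < 1 -> y <= x * z) -> y <= 0.
Proof.
move=> z0 H; rewrite leNgt; apply/negP => y0.
have := H (y / (2 * (y + z))).
have yz : 0 < 2 * (y + z) by lra.
have h1 : 0 < y / (2 * (y + z)) by rewrite divr_gt0.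
have h2 : y / (2 * (y + z)) < 1 by rewrite ltr_pdivrMr //; lra.
rewrite h1 h2 => /(_ isT).
rewrite mulrAC ler_pdivlMr //; nra.
Qed.

Lemma cons_real (F : R -> R) :
  (forall u v, 0 <= u -> u <= v -> v <= 1 -> F u <= F v) ->
  (forall u, 0 <= u -> u <= 1 -> 0 <= F u) ->
  (forall x s, 0 < x < 1 -> 0 < s < 1 -> F (s * x) <= x * F s) ->
  forall u v, 0 <= u -> u <= v -> v <= 1 -> 0 < v -> F u <= (u / v) * F v.
Proof.
move=> Fmono F0 Fc.
have Fz : F 0 <= 0.
  apply: (@lim_le0 _ (F (1/2))); first by apply: F0; lra.
  move=> x /andP[x0 x1]; apply: le_trans (Fc x (1/2) _ _); last lra.
    by apply: Fmono; nra.
  by rewrite x0 x1.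
move=> u v u0 uv v1 v0.
have [->|up] := eqVneq u 0.
  by rewrite mul0r mul0r.
have {up} up : 0 < u by rewrite lt_def up u0.
have [->|uv'] := eqVneq u v; first by rewrite divff ?mul1r // gt_eqF.
have {uv'} uv' : u < v by rewrite lt_def eq_sym uv' uv.
have [v1'|v1'] := eqVneq v 1.
  subst v; rewrite divr1.
  apply: (@lim_le1 u); first by rewrite u0.
    by apply: F0 => //; lra.
  move=> s /andP[us s1].
  have s0 : 0 < s by lra.
  have h1 : 0 < u / s < 1.
    by rewrite divr_gt0 //= ltr_pdivrMr // mul1r.
  have h2 : 0 < s < 1 by rewrite s0 s1.
  have := Fc (u / s) s h1 h2.
  rewrite mulrC divfK ?gt_eqF // => H.
  have Fs1 : F s <= F 1 by apply: Fmono; lra.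
  have Fs0 : 0 <= F s by apply: F0; lra.
  rewrite -ler_pdivlMl // mulrA (mulrC _ u).
  apply: le_trans H _; apply: ler_wpM2l => //.
  by rewrite divr_ge0 // ltW.
have v1x : v < 1 by rewrite lt_def eq_sym v1' v1.
have h1 : 0 < u / v < 1 by rewrite divr_gt0 //= ltr_pdivrMr // mul1r.
have h2 : 0 < v < 1 by rewrite v0 v1x.
by have := Fc (u / v) v h1 h2; rewrite mulrC divfK ?gt_eqF.
Qed.

Lemma cons_final (F : R -> R) :
  (forall u v, 0 <= u -> u <= v -> v <= 1 -> F u <= F v) ->
  (forall u, 0 <= u -> u <= 1 -> 0 <= F u) ->
  (forall x s, 0 < x < 1 -> 0 < s < 1 -> F (s * x) <= x * F s) ->
  forall al la ta, 0 <= al -> al <= la -> la < ta -> ta <= 1 ->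
  F al <= al / (ta - la) * (F ta - F la).
Proof.
move=> Fmono F0 Fc al la ta al0 alla lata ta1.
have ta0 : 0 < ta by lra.
have Ha := cons_real Fmono F0 Fc al0 (le_trans alla (ltW lata)) ta1 ta0.
have Hl := cons_real Fmono F0 Fc (le_trans al0 alla) (ltW lata) ta1 ta0.
have Ft0 : 0 <= F ta by apply: F0; lra.
have d0 : 0 < ta - la by lra.
apply: le_trans Ha _.
have -> : al / ta * F ta = al / (ta - la) * ((1 - la / ta) * F ta).
  by field; apply/andP; split; [rewrite gt_eqF|rewrite gt_eqF //; lra].
apply: ler_wpM2l; first by rewrite divr_ge0 // ltW.
by rewrite mulrBl mul1r lerB.
Qed.

End RealLem.

Notation trip := (bool * bool * bool)%type.
Definition tdef : trip := (false, false, false).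

Section Hist.
Context {d : measure_display} {T : measurableType d} {R : realType}.
Context (P : nat -> T -> R) (alpha lambda tau : nat -> hist -> R).

Local Notation step := (step P alpha lambda tau).
Local Notation history := (history P alpha lambda tau).

Fixpoint histf (j : nat) (o : trip) (t : nat) (w : T) : hist :=
  if t is t'.+1 then
    rcons (histf j o t' w) (if t' == j then o else step t' (histf j o t' w) w)
  else [::].

Lemma size_histf j o t w : size (histf j o t w) = t.
Proof. by elim: t => //= t IH; rewrite size_rcons IH. Qed.

Lemma history_histf j o t w : (t <= j)%N -> history t w = histf j o t w.
Proof.
elim: t => //= t IH tj; rewrite IH ?(ltnW tj) //.
by rewrite (_ : (t == j) = false) // ltn_eqF.
Qed.

Lemma take_histf j o t s w : (s <= t)%N -> take s (histf j o t w) = histf j o s w.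
Proof.
elim: t => [|t IH] st; first by rewrite leqn0 in st; rewrite (eqP st).
rewrite leq_eqVlt in st; case/orP: st => [/eqP ->|st].
  by rewrite take_oversize // size_histf.
rewrite /= -cats1 take_cat size_histf; rewrite ltnS leq_eqVlt in st.
case/orP: st => [/eqP ->|st]; last by rewrite st IH // ltnW.
by rewrite ltnn subnn take0 cats0.
Qed.

Lemma nth_histf j o t s w : (s < t)%N ->
  nth tdef (histf j o t w) s = if s == j then o else step s (histf j o s w) w.
Proof.
elim: t => // t IH st; rewrite /= nth_rcons size_histf.
rewrite ltnS leq_eqVlt in st; case/orP: st => [/eqP ->|st].
  by rewrite ltnn eqxx.
by rewrite st IH.
Qed.

End Hist.

Section Hist2.
Context {d : measure_display} {T : measurableType d} {R : realType}.
Context (P : nat -> T -> R) (alpha lambda tau : nat -> hist -> R).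

Local Notation step := (step P alpha lambda tau).
Local Notation history := (history P alpha lambda tau).
Local Notation histf := (histf P alpha lambda tau).

Definition Bs (s : nat) (k : hist) : set R :=
  [set x | (x <= alpha s (take s k), x <= lambda s (take s k), x <= tau s (take s k))
           = nth tdef k s].

Lemma histf_rect j o t w (k : hist) : size k = t ->
  (histf j o t w = k) <->
  (((j < t)%N ==> (nth tdef k j == o)) /\
   forall s, (s < t)%N -> s != j -> Bs s k (P s w)).
Proof.
move=> sk; split.
  move=> <-; split.
    by apply/implyP => jt; rewrite nth_histf // eqxx.
  move=> s st sj; rewrite /Bs /= take_histf ?(ltnW st) // nth_histf //.
  by rewrite (negbTE sj).
case=> /implyP Hj Hs.
suff H : forall u, (u <= t)%N -> histf j o u w = take u k.
  by rewrite H // -sk take_size.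
elim=> [|u IH] ut /=; first by rewrite take0.
rewrite IH ?(ltnW ut) // (take_nth tdef) ?sk //.
congr rcons; case: eqP => [uj|/eqP uj].
  by subst u; rewrite (eqP (Hj ut)).
by have := Hs u ut uj; rewrite /Bs /=.
Qed.

Lemma measurable_le_eq (a : R) (b : bool) : measurable [set x : R | (x <= a) = b].
Proof.
case: b.
  rewrite (_ : [set x | (x <= a) = true] = `]-oo, a]%classic); first exact: measurable_itv.
  by apply/seteqP; split => x /=; rewrite in_itv /=.
rewrite (_ : [set x | (x <= a) = false] = `]a, +oo[%classic); first exact: measurable_itv.
apply/seteqP; split => x /=; rewrite in_itv /= andbT ltNge.
  by move=> ->.
by move/negbTE.
Qed.

Lemma measurable_Bs s k : measurable (Bs s k).
Proof.
rewrite /Bs; case: (nth tdef k s) => [[r c] sv].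
rewrite (_ : [set x | _ = (r, c, sv)] =
  [set x | (x <= alpha s (take s k)) = r] `&` [set x | (x <= lambda s (take s k)) = c]
   `&` [set x | (x <= tau s (take s k)) = sv]).
  by apply: measurableI; [apply: measurableI|]; exact: measurable_le_eq.
apply/seteqP; split => x /=.
  by case=> -> -> ->.
by case=> [[-> ->] ->].
Qed.

End Hist2.
Section Meas.
Context {d : measure_display} {T : measurableType d} {R : realType}.
Context (Pr : probability T R).

Definition pr (E : set T) : R := fine (Pr E).

Lemma prE E : measurable E -> Pr E = (pr E)%:E.
Proof. by move=> mE; rewrite /pr fineK // fin_num_measure. Qed.

Lemma pr_ge0 E : 0 <= pr E.
Proof. by rewrite /pr fine_ge0. Qed.

Lemma pr_le1 E : measurable E -> pr E <= 1.
Proof. by move=> mE; rewrite -lee_fin -prE // probability_le1. Qed.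

Lemma pr_setT : pr setT = 1.
Proof. by rewrite /pr probability_setT. Qed.

Lemma meas_sum_ind I (s : seq I) (c : I -> R) (E : I -> set T) :
  (forall i, measurable (E i)) ->
  measurable_fun setT (fun w => \sum_(i <- s) c i * \1_(E i) w).
Proof.
move=> mE; apply: measurable_sum => i.
apply: measurable_funM => //; exact: measurable_indic.
Qed.

Lemma expect_sum I (s : seq I) (c : I -> R) (E : I -> set T) :
  (forall i, 0 <= c i) -> (forall i, measurable (E i)) ->
  ('E_Pr[fun w => (\sum_(i <- s) c i * \1_(E i) w)%R] = (\sum_(i <- s) c i * pr (E i))%:E)%E.
Proof.
move=> c0 mE; rewrite unlock.
under eq_integral do rewrite -sumEFin.
rewrite ge0_integral_sum //; last first.
  by move=> i x _; rewrite lee_fin mulr_ge0.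
  by move=> i; apply/measurable_EFinP; apply: measurable_funM => //; exact: measurable_indic.
rewrite -sumEFin; apply: eq_bigr => i _.
under eq_integral do rewrite EFinM.
rewrite ge0_integralZl_EFin //.
- by rewrite integral_indic // setIT /pr EFinM fineK ?fin_num_measure.
- by apply/measurable_EFinP; exact: measurable_indic.
Qed.



Lemma sum_tuple_ind (t : nat) (X : T -> hist) (F : hist -> R) w : size (X w) = t ->
  F (X w) = \sum_(k : t.-tuple trip) F k * \1_([set w' | X w' = k]) w.
Proof.
move=> sX; pose k0 : t.-tuple trip := Tuple (introT eqP sX).
rewrite (bigD1 k0) //= indicE mem_set // mulr1 big1 ?addr0 //.
move=> k kk0; rewrite indicE memNset ?mulr0 //= => Xk.
by move/eqP: kk0; apply; apply: val_inj; rewrite /= -Xk.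
Qed.

Lemma expect_fun (t : nat) (X : T -> hist) (F : hist -> R) :
  (forall w, size (X w) = t) -> (forall k, 0 <= F k) ->
  (forall k, measurable [set w | X w = k]) ->
  ('E_Pr[fun w => F (X w)] = (\sum_(k : t.-tuple trip) F k * pr [set w | X w = k])%:E)%E.
Proof.
move=> sX F0 mX.
rewrite (_ : (fun w => F (X w)) =
   (fun w => \sum_(k : t.-tuple trip) F k * \1_([set w' | X w' = k]) w)).
  by rewrite expect_sum.
by apply/funext => w; exact: sum_tuple_ind.
Qed.


Lemma sum_tuple_ind2 t (X : T -> hist) (c : hist -> R) (Y : hist -> set T) w :
  size (X w) = t ->
  c (X w) * \1_(Y (X w)) w =
  \sum_(k : t.-tuple trip) c k * \1_(Y k `&` [set w' | X w' = k]) w.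
Proof.
move=> sX; rewrite (@sum_tuple_ind t X (fun k => c k * \1_(Y k) w) w sX).
by apply: eq_bigr => k _; rewrite indicI mulrA.
Qed.

Lemma meas_fun2 t (X : T -> hist) (c : hist -> R) (Y : hist -> set T) :
  (forall w, size (X w) = t) -> (forall k, measurable (Y k)) ->
  (forall k, measurable [set w | X w = k]) ->
  measurable_fun setT (fun w => c (X w) * \1_(Y (X w)) w).
Proof.
move=> sX mY mX.
rewrite (_ : (fun w => _) = (fun w => \sum_(k : t.-tuple trip)
          c k * \1_(Y k `&` [set w' | X w' = k]) w)).
  by apply: meas_sum_ind => k; exact: measurableI.
by apply/funext => w; exact: sum_tuple_ind2.
Qed.

Lemma meas_fun1 t (X : T -> hist) (F : hist -> R) :
  (forall w, size (X w) = t) -> (forall k, measurable [set w | X w = k]) ->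
  measurable_fun setT (fun w => F (X w)).
Proof.
move=> sX mX.
rewrite (_ : (fun w => _) = (fun w => F (X w) * \1_((fun _ => setT) (X w)) w)).
  exact: (@meas_fun2 t X F (fun _ => setT) sX (fun _ => measurableT) mX).
by apply/funext => w; rewrite indicE mem_set // mulr1.
Qed.

Lemma expect_fun2 t (X : T -> hist) (c : hist -> R) (Y : hist -> set T) :
  (forall w, size (X w) = t) -> (forall w, 0 <= c (X w)) ->
  (forall k, measurable (Y k)) -> (forall k, measurable [set w | X w = k]) ->
  ('E_Pr[fun w => (c (X w) * \1_(Y (X w)) w)%R] =
   (\sum_(k : t.-tuple trip) c k * pr (Y k `&` [set w | X w = k]))%:E)%E.
Proof.
move=> sX c0 mY mX.
pose c' k := if pselect (exists w, X w = k) is left _ then c k else 0.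
have c'0 k : 0 <= c' k.
  by rewrite /c'; case: pselect => // -[w <-].
have cc w : c (X w) = c' (X w).
  by rewrite /c'; case: pselect => // -[]; exists w.
rewrite (_ : (fun w => _) = (fun w => \sum_(k : t.-tuple trip)
          c' k * \1_(Y k `&` [set w' | X w' = k]) w)).
  rewrite expect_sum //; last by move=> k; exact: measurableI.
  congr (_%:E); apply: eq_bigr => k _; rewrite /c'; case: pselect => // nk.
  rewrite (_ : _ `&` _ = set0) ?/pr ?measure0 ?mulr0 //.
  by apply/seteqP; split => // w [_ /= Xk]; apply: nk; exists w.
by apply/funext => w; rewrite cc; exact: sum_tuple_ind2.
Qed.

Lemma partition t (X : T -> hist) (E : set T) :
  (forall w, size (X w) = t) -> measurable E ->
  (forall k, measurable [set w | X w = k]) ->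
  pr E = \sum_(k : t.-tuple trip) pr (E `&` [set w | X w = k]).
Proof.
move=> sX mE mX.
have := @expect_fun2 t X (fun _ => 1) (fun _ => E) sX (fun _ => ler01) (fun _ => mE) mX.
have e1 : (fun w => 1 * \1_((fun _ => E) (X w)) w) =
     (fun w => \sum_(i <- [:: tt]) 1 * \1_E w) :> (T -> R).
  by apply/funext => w; rewrite big_seq1.
rewrite e1 expect_sum // big_seq1 mul1r => -[->].
by apply: eq_bigr => k _; rewrite mul1r.
Qed.

Lemma expect_sumf I (s : seq I) (Q : pred I) (f : I -> T -> R) :
  (forall i, measurable_fun setT (f i)) -> (forall i w, 0 <= f i w) ->
  ('E_Pr[fun w => (\sum_(i <- s | Q i) f i w)%R] = \sum_(i <- s | Q i) 'E_Pr[f i])%E.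
Proof.
move=> mf f0; rewrite unlock.
under eq_integral do rewrite -sumEFin big_mkcond.
rewrite ge0_integral_sum //; last first.
  by move=> i x _; case: (Q i) => //; rewrite lee_fin.
  move=> i; case: (Q i); last exact: measurable_cst.
  by apply/measurable_EFinP; exact: mf.
rewrite [RHS]big_mkcond; apply: eq_bigr => i _; case: (Q i) => //.
by rewrite integral0.
Qed.

End Meas.


Section Hist3.
Context {d : measure_display} {T : measurableType d} {R : realType}.
Context (P : nat -> T -> R) (alpha lambda tau : nat -> hist -> R).

Local Notation step := (step P alpha lambda tau).
Local Notation history := (history P alpha lambda tau).
Local Notation histf := (histf P alpha lambda tau).

Lemma history_eq t w : history t w = histf t tdef t w.
Proof. exact: history_histf. Qed.

Lemma size_history t w : size (history t w) = t.
Proof. by rewrite history_eq size_histf. Qed.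

Lemma take_history s t w : (s <= t)%N -> take s (history t w) = history s w.
Proof.
by move=> st; rewrite history_eq take_histf // -history_histf.
Qed.

Lemma nth_history s t w : (s < t)%N ->
  nth tdef (history t w) s = step s (history s w) w.
Proof.
move=> st; rewrite history_eq nth_histf // ltn_eqF // -history_histf //.
exact: ltnW.
Qed.

Lemma histf_actual j o t w : ((j < t)%N -> o = step j (history j w) w) ->
  histf j o t w = history t w.
Proof.
elim: t => //= t IH H; rewrite IH; last by move=> jt; apply: H; apply: ltnW.
case: eqP => // tj; subst t; rewrite H //.
Qed.

Lemma take_K j o t w : (j <= t)%N -> take j (histf j o t w) = history j w.
Proof. by move=> jt; rewrite take_histf // -history_histf. Qed.

Definition trip_le (x y : trip) : bool :=
  let: (r, c, s) := x in let: (r', c', s') := y in [&& r ==> r', c ==> c' & s' ==> s].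

Lemma hist_le_nil : hist_le [::] [::].
Proof. by split. Qed.

Lemma hist_le_rcons g g' x x' : hist_le g g' -> trip_le x x' ->
  hist_le (rcons g x) (rcons g' x').
Proof.
case=> sg H xx; split; first by rewrite !size_rcons sg.
move=> i; rewrite size_rcons ltnS leq_eqVlt => /orP[/eqP ->|ig].
  by rewrite !nth_rcons sg ltnn eqxx; move: xx; case: x => [[? ?] ?]; case: x' => [[? ?] ?].
by rewrite !nth_rcons -sg ig; apply: H.
Qed.

Lemma hist_le_take g g' i : hist_le g g' -> hist_le (take i g) (take i g').
Proof.
case=> sg H; split; first by rewrite !size_take sg.
move=> k; rewrite size_take => ki.
have kg : (k < size g)%N.
  by move: ki; case: ifP => [ig ki|_ //]; exact: ltn_trans ki ig.
have ki' : (k < i)%N.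
  move: ki; case: ifP => [_ //|/negbT]; rewrite -leqNgt => gi ki.
  exact: leq_trans ki gi.
by rewrite !nth_take //; apply: H.
Qed.

Definition Rn (h : hist) : nat := \sum_(0 <= i < size h) (nth tdef h i).1.1.

Lemma Rn_le g g' : hist_le g g' -> (Rn g <= Rn g')%N.
Proof.
case=> sg H; rewrite /Rn -sg big_nat [X in (_ <= X)%N]big_nat.
apply: leq_sum => i /andP[_ ig]; have := H i ig.
case: (nth tdef g i) => [[r c] s]; case: (nth tdef g' i) => [[r' c'] s'] /=.
by case: r; case: r' => //; rewrite /= andbF.
Qed.

Lemma num_rej_Rn t w : num_rej P alpha lambda tau t w = Rn (history t w).
Proof.
rewrite /num_rej /Rn size_history big_mkord; apply: eq_bigr => i _.
by rewrite nth_history.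
Qed.


Lemma histf_mono j o1 o2 t w : trip_le o1 o2 ->
  monotone_past alpha -> monotone_past lambda -> monotone_past (fun t h => 1 - tau t h) ->
  hist_le (histf j o1 t w) (histf j o2 t w).
Proof.
move=> o12 ma ml mt; elim: t => [|t IH] /=; first exact: hist_le_nil.
apply: hist_le_rcons => //; case: eqP => // _.
rewrite /step /=.
have := ma t _ _ (size_histf _ _ _ _ _ _ _ _) IH.
have := ml t _ _ (size_histf _ _ _ _ _ _ _ _) IH.
have := mt t _ _ (size_histf _ _ _ _ _ _ _ _) IH.
move=> /= h1 h2 h3.
apply/and3P; split; apply/implyP => H.
- exact: le_trans H h3.
- exact: le_trans H h2.
- apply: le_trans H _; lra.
Qed.

Definition o111 : trip := (true, true, true).
Definition o001 : trip := (false, false, true).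

Lemma step_rej j w : alpha_at P alpha lambda tau j w <= lambda_at P alpha lambda tau j w
   < tau_at P alpha lambda tau j w ->
  rej P alpha lambda tau j w -> step j (history j w) w = o111.
Proof.
rewrite /rej /alpha_at /lambda_at /tau_at /step /o111 => /andP[al lt] H.
rewrite H (le_trans H al) (le_trans H (le_trans al (ltW lt))) //.
Qed.

Lemma step_mid j w : alpha_at P alpha lambda tau j w <= lambda_at P alpha lambda tau j w ->
  lambda_at P alpha lambda tau j w < P j w <= tau_at P alpha lambda tau j w ->
  step j (history j w) w = o001.
Proof.
rewrite /alpha_at /lambda_at /tau_at /step /o001 => al /andP[lP Pt].
rewrite Pt !leNgt lP (le_lt_trans al lP) //.
Qed.

Lemma Rn_K j t w :
  monotone_past alpha -> monotone_past lambda -> monotone_past (fun t h => 1 - tau t h) ->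
  alpha_at P alpha lambda tau j w <= lambda_at P alpha lambda tau j w
   < tau_at P alpha lambda tau j w ->
  rej P alpha lambda tau j w ->
  (Rn (histf j o001 t w) <= Rn (history t w))%N.
Proof.
move=> ma ml mt h r.
rewrite -(@histf_actual j o111); last by move=> _; rewrite step_rej.
by apply: Rn_le; apply: histf_mono.
Qed.

Lemma K_mid j t w :
  alpha_at P alpha lambda tau j w <= lambda_at P alpha lambda tau j w ->
  lambda_at P alpha lambda tau j w < P j w <= tau_at P alpha lambda tau j w ->
  histf j o001 t w = history t w.
Proof. by move=> h1 h2; apply: histf_actual => _; rewrite step_mid. Qed.

Definition Rect j t k : set T :=
  \bigcap_(s in [set s | (s < t)%N && (s != j)]) (P s @^-1` Bs alpha lambda tau s k).

Lemma histf_set j o t k : size k = t ->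
  [set w | histf j o t w = k] =
  if (j < t)%N ==> (nth tdef k j == o) then Rect j t k else set0.
Proof.
move=> sk; apply/seteqP; split => w /=.
  move/(histf_rect _ _ _ _ _ _ _ sk) => [-> H] /= s /andP[st sj].
  exact: H.
case: ifP => // c H; apply/(histf_rect _ _ _ _ _ _ _ sk); split => // s st sj.
by apply: H; rewrite /= st sj.
Qed.

Lemma meas_histf j o t k : (forall s, measurable_fun setT (P s)) ->
  measurable [set w | histf j o t w = k].
Proof.
move=> mP; have [sk|sk] := eqVneq (size k) t.
  rewrite histf_set //; case: ifP => // _.
  apply: bigcap_measurableType => s _.
  by rewrite -[X in measurable X]setTI; apply: mP => //; exact: measurable_Bs.
rewrite (_ : [set w | _] = set0) //; apply/seteqP; split => // w /= hk.
by move: sk; rewrite -hk size_histf eqxx.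
Qed.

Lemma meas_history t k : (forall s, measurable_fun setT (P s)) ->
  measurable [set w | history t w = k].
Proof.
move=> mP; rewrite (_ : [set w | _] = [set w | histf t tdef t w = k]).
  exact: meas_histf.
by apply/seteqP; split => w /=; rewrite history_eq.
Qed.

End Hist3.


Section Indep.
Context {d : measure_display} {T : measurableType d} {R : realType}.
Context (Pr : probability T R).
Context (P : nat -> T -> R) (alpha lambda tau : nat -> hist -> R) (null : nat -> bool).

Lemma indep j t k (B : set R) : null j -> measurable B ->
  nulls_independent P Pr null -> (forall s, measurable_fun setT (P s)) ->
  Pr (P j @^-1` B `&` Rect P alpha lambda tau j t k) =
  (Pr (P j @^-1` B) * Pr (Rect P alpha lambda tau j t k))%E.
Proof.
move=> nj mB Hind mP.
pose N' := [seq s <- iota 0 t | null s && (s != j)].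
pose M := [seq s <- iota 0 t | ~~ null s].
pose Bf s := if s == j then B else Bs alpha lambda tau s k.
have mBf s : measurable (Bf s) by rewrite /Bf; case: eqP => // _; exact: measurable_Bs.
have memNM s : (s \in N' ++ M) = (s < t)%N && (s != j).
  rewrite mem_cat !mem_filter; rewrite mem_iota /=.
  case: (eqVneq s j) => [->|sj]; first by rewrite nj /= !andbF.
  by case: (null s); rewrite /= add0n ?andbT ?orbF.
have uN' : uniq N' by apply: filter_uniq; exact: iota_uniq.
have aN' : all null N' by apply/allP => s; rewrite mem_filter => /andP[/andP[]].
have aM : all (fun k => ~~ null k) M by apply/allP => s; rewrite mem_filter => /andP[].
have uN : uniq (j :: N') by rewrite /= uN' andbT mem_filter eqxx andbF.
have aN : all null (j :: N') by rewrite /= nj aN'.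
have H1 := Hind (j :: N') M Bf uN aN aM mBf.
have H2 := Hind N' M Bf uN' aN' aM mBf.
have E2 : \bigcap_(s in [set s | s \in N' ++ M]) (P s @^-1` Bf s) =
          Rect P alpha lambda tau j t k.
  apply/seteqP; split => w /= H s.
    move=> /= hs; have := H s; rewrite /= memNM hs => /(_ isT).
    by rewrite /Bf; case/andP: hs => _ /negbTE ->.
  rewrite /= memNM => hs; have := H s hs.
  by rewrite /Bf; case/andP: hs => _ /negbTE ->.
have E1 : \bigcap_(s in [set s | s \in (j :: N') ++ M]) (P s @^-1` Bf s) =
          P j @^-1` B `&` Rect P alpha lambda tau j t k.
  rewrite -E2; apply/seteqP; split => w /= H.
    split; first by have := H j; rewrite /= inE eqxx /Bf eqxx => /(_ isT).
    by move=> s /= hs; apply: H; rewrite /= inE hs orbT.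
  case: H => Hj H s /=; rewrite inE => /orP[/eqP ->|hs].
    by rewrite /Bf eqxx.
  exact: H.
rewrite -E1 H1 big_cons /Bf eqxx -/Bf -muleA -H2 E2 //.
Qed.

End Indep.


Section PrLem.
Context {d : measure_display} {T : measurableType d} {R : realType}.
Context (Pr : probability T R).

Lemma pr_le (A B : set T) : measurable A -> measurable B -> A `<=` B ->
  pr Pr A <= pr Pr B.
Proof.
move=> mA mB AB; rewrite -lee_fin -!prE //.
by apply: le_measure => //; rewrite inE.
Qed.

Lemma prU (A B : set T) : measurable A -> measurable B -> A `&` B = set0 ->
  pr Pr (A `|` B) = pr Pr A + pr Pr B.
Proof.
move=> mA mB AB; apply: EFin_inj; rewrite EFinD -!prE //; last exact: measurableU.
exact: measureU.
Qed.

Lemma pr0 : pr Pr set0 = 0.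
Proof. by rewrite /pr measure0. Qed.

Context (P : nat -> T -> R) (mP : forall j, measurable_fun setT (P j)).

Lemma meas_P_le j c : measurable [set w | P j w <= c].
Proof.
have := mP j measurableT (measurable_le_eq c true).
by rewrite setTI.
Qed.

Lemma meas_P_mid j l u : measurable [set w | l < P j w <= u].
Proof.
rewrite (_ : [set w | _] = [set w | P j w <= u] `&` ~` [set w | P j w <= l]).
  by apply: measurableI; [|apply: measurableC]; exact: meas_P_le.
apply/seteqP; split => w /=; rewrite ltNge.
  by case/andP => /negP h ->.
by case=> -> /negP ->.
Qed.

Lemma pr_mid j l u (E : set T) : measurable E -> l <= u ->
  pr Pr ([set w | P j w <= u] `&` E) - pr Pr ([set w | P j w <= l] `&` E) =
  pr Pr ([set w | l < P j w <= u] `&` E).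
Proof.
move=> mE lu.
rewrite (_ : [set w | P j w <= u] `&` E =
   ([set w | P j w <= l] `&` E) `|` ([set w | l < P j w <= u] `&` E)).
  rewrite prU; first by rewrite addrC addKr.
  - by apply: measurableI => //; exact: meas_P_le.
  - by apply: measurableI => //; exact: meas_P_mid.
  apply/seteqP; split => w //= [[h1 _] [/andP[h2 _] _]].
  by move: h2; rewrite ltNge h1.
apply/seteqP; split => w /=.
  case=> h1 h2; case: (boolP (P j w <= l)) => h3; [left|right].
    by split.
  by split => //; rewrite -ltNge in h3; rewrite h3 h1.
by case=> [[h1 h2]|[/andP[h1 h3] h2]]; split => //; apply: le_trans h1 lu.
Qed.

Lemma cons_pr j (E : set T) : measurable E ->
  (forall x s, 0 < x < 1 -> 0 < s < 1 ->
     pr Pr ([set w | P j w <= s * x] `&` E) <= x * pr Pr ([set w | P j w <= s] `&` E)) ->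
  forall al la ta, 0 <= al -> al <= la -> la < ta -> ta <= 1 ->
  pr Pr ([set w | P j w <= al] `&` E) <=
  al / (ta - la) * pr Pr ([set w | la < P j w <= ta] `&` E).
Proof.
move=> mE Hc al la ta al0 alla lata ta1.
rewrite -pr_mid //; last exact: ltW.
apply: (cons_final (F := fun u => pr Pr ([set w | P j w <= u] `&` E))) => //.
  move=> u v u0 uv v1; apply: pr_le; try (apply: measurableI => //; exact: meas_P_le).
  by move=> w /= [h1 h2]; split => //; apply: le_trans h1 uv.
by move=> u _ _; exact: pr_ge0.
Qed.

End PrLem.


Section Main.
Context {d : measure_display} {T : measurableType d} {R : realType}.
Context (Pr : probability T R) (P : nat -> T -> R) (null : nat -> bool).
Context (alpha lambda tau : nat -> hist -> R) (a : R).
Context (mP : forall j, measurable_fun setT (P j)).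
Context (P01 : forall j w, 0 <= P j w <= 1).
Context (range : forall t h, size h = t ->
     [/\ 0 <= alpha t h <= 1, 0 <= lambda t h <= 1 & 0 <= tau t h <= 1]).
Context (order : forall j w, alpha_at P alpha lambda tau j w <= lambda_at P alpha lambda tau j w
             < tau_at P alpha lambda tau j w).

Local Notation history := (history P alpha lambda tau).
Local Notation pr := (pr Pr).

Definition cG j (g : hist) := alpha j g / (tau j g - lambda j g).
Definition YG j (g : hist) := [set w | lambda j g < P j w <= tau j g].
Definition YR j (g : hist) := [set w | P j w <= alpha j g].
Definition G j w := alpha_at P alpha lambda tau j w *
  ((if (lambda_at P alpha lambda tau j w < P j w) && (P j w <= tau_at P alpha lambda tau j w)
    then 1 else 0) / (tau_at P alpha lambda tau j w - lambda_at P alpha lambda tau j w)).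

Lemma G_eq j w : G j w = cG j (history j w) * \1_(YG j (history j w)) w.
Proof.
rewrite /G /cG /YG indicE /alpha_at /lambda_at /tau_at.
case: ifP => h.
  by rewrite mem_set // mulr1 mul1r.
have nY : ~ YG j (history j w) w by rewrite /YG /= => H; move: h; rewrite H.
by rewrite memNset // mul0r !mulr0.
Qed.

Lemma rej_eq j w : ((rej P alpha lambda tau j w)%:R : R) = 1 * \1_(YR j (history j w)) w.
Proof.
rewrite /rej /YR indicE mul1r /alpha_at.
case: (boolP (P j w <= alpha j (history j w))) => h; first by rewrite mem_set.
have nY : ~ YR j (history j w) w by rewrite /YR /= => H; move: h; rewrite H.
by rewrite memNset.
Qed.

Lemma G_ge0 j w : 0 <= G j w.
Proof.
have := order j w; case: (range (size_history P alpha lambda tau j w)) => /andP[a0 _] _ _.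
move=> /andP[al lt]; rewrite /G; apply: mulr_ge0 => //.
by apply: divr_ge0; [case: ifP | rewrite subr_ge0 ltW].
Qed.

Lemma cG_ge0 j w : 0 <= cG j (history j w).
Proof.
have := order j w; case: (range (size_history P alpha lambda tau j w)) => /andP[a0 _] _ _.
move=> /andP[al lt]; rewrite /cG; apply: divr_ge0 => //.
by rewrite subr_ge0 ltW.
Qed.

Lemma mhist t k : measurable [set w | history t w = k].
Proof. exact: meas_history. Qed.

Lemma mYG j g : measurable (YG j g). Proof. exact: meas_P_mid. Qed.
Lemma mYR j g : measurable (YR j g). Proof. exact: meas_P_le. Qed.

Lemma EG j : ('E_Pr[G j] =
  (\sum_(g : j.-tuple trip) cG j g * pr (YG j g `&` [set w | history j w = g]))%:E)%E.
Proof.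
rewrite (_ : G j = fun w => cG j (history j w) * \1_(YG j (history j w)) w).
  apply: expect_fun2 => //; [exact: size_history|exact: cG_ge0|exact: mYG|exact: mhist].
by apply/funext => w; rewrite G_eq.
Qed.

Lemma ER j : ('E_Pr[fun w => ((rej P alpha lambda tau j w)%:R : R)] =
  (\sum_(g : j.-tuple trip) 1 * pr (YR j g `&` [set w | history j w = g]))%:E)%E.
Proof.
rewrite (_ : (fun w => _) = fun w => (fun _ => 1) (history j w) * \1_(YR j (history j w)) w).
  apply: (@expect_fun2 _ _ _ Pr j (history j) (fun _ => 1) (YR j)) => //;
    [exact: size_history|exact: mYR|exact: mhist].
by apply/funext => w; rewrite rej_eq.
Qed.

Lemma mG j : measurable_fun setT (G j).
Proof.
rewrite (_ : G j = fun w => cG j (history j w) * \1_(YG j (history j w)) w).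
  apply: meas_fun2 => //; [exact: size_history|exact: mYG|exact: mhist].
by apply/funext => w; rewrite G_eq.
Qed.

Lemma mrej j : measurable_fun setT (fun w => ((rej P alpha lambda tau j w)%:R : R)).
Proof.
rewrite (_ : (fun w => _) = fun w => (fun _ => 1) (history j w) * \1_(YR j (history j w)) w).
  apply: (@meas_fun2 _ _ _ j (history j) (fun _ => 1) (YR j)) => //;
    [exact: size_history|exact: mYR|exact: mhist].
by apply/funext => w; rewrite rej_eq.
Qed.


Lemma A_empty j g : ~ (exists w, history j w = g) -> [set w | history j w = g] = set0.
Proof. by move=> nw; apply/seteqP; split => // w /= hw; apply: nw; exists w. Qed.

Lemma termA j : cond_unif_conservative P alpha lambda tau Pr null -> null j ->
  \sum_(g : j.-tuple trip) 1 * pr (YR j g `&` [set w | history j w = g]) <=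
  \sum_(g : j.-tuple trip) cG j g * pr (YG j g `&` [set w | history j w = g]).
Proof.
move=> Hc nj; apply: ler_sum => g _.
case: (pselect (exists w, history j w = g)) => [[w0 hw]|nw]; last first.
  by rewrite A_empty // !setI0 pr0 !mulr0.
have sg : size g = j by rewrite size_tuple.
case: (range sg) => /andP[a0 a1] /andP[l0 l1] /andP[t0 t1].
have := order j w0; rewrite /alpha_at /lambda_at /tau_at hw => /andP[al lt].
rewrite mul1r; apply: (cons_pr mP) => //; first exact: mhist.
move=> x s hx hs; have := Hc j nj g sg x s hx hs.
by rewrite !prE //; try (by apply: measurableI; [exact: meas_P_le | exact: mhist]).
Qed.

Lemma partA : cond_unif_conservative P alpha lambda tau Pr null ->
  (forall t, {ae Pr, forall w, FDP_ADDIS P alpha lambda tau t w <= a}) ->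
  0 < a ->
  forall t, mFDR P alpha lambda tau Pr null t <= a.
Proof.
move=> Hc Hfdp a0 t.
pose Dh (h : hist) : R := (maxn (Rn h) 1)%:R.
pose sD := \sum_(k : t.-tuple trip) Dh k * pr [set w | history t w = k].
pose sR := \sum_(j < t | null j)
   \sum_(g : j.-tuple trip) 1 * pr (YR j g `&` [set w | history j w = g]).
pose sG := \sum_(j < t)
   \sum_(g : j.-tuple trip) cG j g * pr (YG j g `&` [set w | history j w = g]).
have Dh0 h : 1 <= Dh h by rewrite /Dh ler1n leq_maxr.
have ED : ('E_Pr[fun w => ((maxn (num_rej P alpha lambda tau t w) 1)%:R : R)] = sD%:E)%E.
  rewrite (_ : (fun w => _) = fun w => Dh (history t w)).
    apply: expect_fun; [exact: size_history| move=> k; exact: le_trans ler01 (Dh0 k) | exact: mhist].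
  by apply/funext => w; rewrite num_rej_Rn.
have EV : ('E_Pr[fun w => ((num_false_rej P alpha lambda tau null t w)%:R : R)] = sR%:E)%E.
  rewrite (_ : (fun w => _) = fun w => \sum_(j < t | null j) ((rej P alpha lambda tau j w)%:R : R)).
    rewrite expect_sumf //; try (by move=> j; exact: mrej); try (by move=> j w; exact: ler0n).
    by rewrite /sR -sumEFin; apply: eq_bigr => j _; rewrite ER.
  by apply/funext => w; rewrite /num_false_rej natr_sum.
have EGs : ('E_Pr[fun w => (\sum_(j < t) G j w)%R] = sG%:E)%E.
  rewrite expect_sumf //; try (by move=> j; exact: mG); try (by move=> j w; exact: G_ge0).
  by rewrite /sG -sumEFin; apply: eq_bigr => j _; rewrite EG.
have EaD : ('E_Pr[fun w => (a * Dh (history t w))%R] = (a * sD)%:E)%E.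
  rewrite (@expect_fun _ _ _ Pr t (history t) (fun h => a * Dh h)) //.
  - by rewrite /sD mulr_sumr; congr (_%:E); apply: eq_bigr => k _; rewrite mulrA.
  - exact: size_history.
  - by move=> k; apply: mulr_ge0; [exact: ltW | exact: le_trans ler01 (Dh0 k)].
  - exact: mhist.
have Le : ('E_Pr[fun w => (\sum_(j < t) G j w)%R] <= 'E_Pr[fun w => (a * Dh (history t w))%R])%E.
  apply: expectation_le.
  - by apply: measurable_sum => j; exact: mG.
  - exact: (@meas_fun1 _ _ _ t (history t) (fun h => a * Dh h) (size_history _ _ _ _ t) (mhist t)).
  - by move=> w; apply: sumr_ge0 => j _; exact: G_ge0.
  - by move=> w; apply: mulr_ge0; [exact: ltW | exact: le_trans ler01 (Dh0 _)].
  apply: filterS (Hfdp t) => w /= H.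
  have Dp : 0 < Dh (history t w) by apply: lt_le_trans (Dh0 _).
  have : FDP_ADDIS P alpha lambda tau t w = (\sum_(j < t) G j w) / Dh (history t w).
    by rewrite /FDP_ADDIS /Dh num_rej_Rn.
  by move=> E; rewrite E ler_pdivrMr // in H; rewrite mulrC.
rewrite EGs EaD lee_fin in Le.
have sD1 : 1 <= sD.
  rewrite -(pr_setT Pr) (@partition _ _ _ Pr t (history t)) //;
    [|exact: size_history|exact: mhist].
  apply: ler_sum => k _; rewrite setTI -[X in X <= _]mul1r.
  by apply: ler_wpM2r; [exact: pr_ge0 | exact: Dh0].
have sRG : sR <= sG.
  apply: (@le_trans _ _ (\sum_(j < t | null j)
     \sum_(g : j.-tuple trip) cG j g * pr (YG j g `&` [set w | history j w = g]))).
    by apply: ler_sum => j nj; exact: termA.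
  rewrite /sG [X in _ <= X](bigID (fun j : 'I_t => null j)) /= lerDl.
  apply: sumr_ge0 => j _; rewrite -lee_fin -EG; apply: expectation_ge0 => w.
  exact: G_ge0.
rewrite /mFDR EV ED /= ler_pdivrMr; last exact: lt_le_trans sD1.
apply: le_trans sRG _; apply: le_trans Le _.
by rewrite mulrC.
Qed.

End Main.


Section PartB.
Context {d : measure_display} {T : measurableType d} {R : realType}.
Context (Pr : probability T R) (P : nat -> T -> R) (null : nat -> bool).
Context (alpha lambda tau : nat -> hist -> R) (a : R).
Context (mP : forall j, measurable_fun setT (P j)).
Context (P01 : forall j w, 0 <= P j w <= 1).
Context (range : forall t h, size h = t ->
     [/\ 0 <= alpha t h <= 1, 0 <= lambda t h <= 1 & 0 <= tau t h <= 1]).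
Context (order : forall j w, alpha_at P alpha lambda tau j w <= lambda_at P alpha lambda tau j w
             < tau_at P alpha lambda tau j w).
Context (Hc : cond_unif_conservative P alpha lambda tau Pr null).
Context (Hind : nulls_independent P Pr null).
Context (ma : monotone_past alpha) (ml : monotone_past lambda)
        (mt : monotone_past (fun t h => 1 - tau t h)).

Local Notation history := (history P alpha lambda tau).
Local Notation histf := (histf P alpha lambda tau).
Local Notation pr := (pr Pr).
Local Notation G := (G P alpha lambda tau).
Local Notation cG := (cG alpha lambda tau).

Definition Dh (h : hist) : R := (maxn (Rn h) 1)%:R.

Lemma Dh1 h : 1 <= Dh h.
Proof. by rewrite /Dh ler1n leq_maxr. Qed.

Lemma Dh0 h : 0 < Dh h.
Proof. exact: lt_le_trans ltr01 (Dh1 h). Qed.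

Lemma inv_le (x y : R) : 0 < y -> y <= x -> 1 / x <= 1 / y.
Proof.
move=> y0 yx; have x0 : 0 < x by apply: lt_le_trans yx.
by rewrite !div1r lef_pV2 ?posrE.
Qed.

Lemma marg_cons j : null j ->
  forall x s, 0 < x < 1 -> 0 < s < 1 ->
  pr ([set w | P j w <= s * x] `&` setT) <= x * pr ([set w | P j w <= s] `&` setT).
Proof.
move=> nj x s hx hs; rewrite !setIT.
rewrite (@partition _ _ _ Pr j (history j) [set w | P j w <= s * x]);
  [|exact: size_history|exact: meas_P_le|exact: mhist].
rewrite (@partition _ _ _ Pr j (history j) [set w | P j w <= s]);
  [|exact: size_history|exact: meas_P_le|exact: mhist].
rewrite mulr_sumr; apply: ler_sum => g _.
have := @Hc j nj g (size_tuple g) x s hx hs.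
by rewrite !prE //; try (by apply: measurableI; [exact: meas_P_le | exact: mhist]).
Qed.

Lemma margA j al la ta : null j -> 0 <= al -> al <= la -> la < ta -> ta <= 1 ->
  pr [set w | P j w <= al] <= al / (ta - la) * pr [set w | la < P j w <= ta].
Proof.
move=> nj al0 alla lata ta1.
have := @cons_pr _ _ _ Pr P mP j setT measurableT (marg_cons nj) al la ta al0 alla lata ta1.
by rewrite !setIT.
Qed.


Definition Kf j t w := histf j o001 t w.
Definition YRk j (k : hist) := [set w | P j w <= alpha j (take j k)].
Definition YGk j (k : hist) := [set w | lambda j (take j k) < P j w <= tau j (take j k)].
Definition c2 j (k : hist) := cG j (take j k) / Dh k.

Lemma take_Kf j t w : (j <= t)%N -> take j (Kf j t w) = history j w.
Proof. exact: take_K. Qed.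

Lemma mK j t k : measurable [set w | Kf j t w = k].
Proof. exact: meas_histf. Qed.

End PartB.


Section PartB2.
Context {d : measure_display} {T : measurableType d} {R : realType}.
Context (Pr : probability T R) (P : nat -> T -> R) (null : nat -> bool).
Context (alpha lambda tau : nat -> hist -> R) (a : R).
Context (mP : forall j, measurable_fun setT (P j)).
Context (P01 : forall j w, 0 <= P j w <= 1).
Context (range : forall t h, size h = t ->
     [/\ 0 <= alpha t h <= 1, 0 <= lambda t h <= 1 & 0 <= tau t h <= 1]).
Context (order : forall j w, alpha_at P alpha lambda tau j w <= lambda_at P alpha lambda tau j w
             < tau_at P alpha lambda tau j w).
Context (Hc : cond_unif_conservative P alpha lambda tau Pr null).
Context (Hind : nulls_independent P Pr null).
Context (ma : monotone_past alpha) (ml : monotone_past lambda)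
        (mt : monotone_past (fun t h => 1 - tau t h)).

Local Notation history := (history P alpha lambda tau).
Local Notation histf := (histf P alpha lambda tau).
Local Notation pr := (pr Pr).
Local Notation G := (G P alpha lambda tau).
Local Notation cG := (cG alpha lambda tau).
Local Notation Kf := (Kf P alpha lambda tau).
Local Notation YRk := (YRk P alpha).
Local Notation YGk := (YGk P lambda tau).
Local Notation Dh := (@Dh R).
Local Notation c2 := (c2 alpha lambda tau).

Lemma LHS_le j t w : (j < t)%N ->
  (rej P alpha lambda tau j w)%:R / Dh (history t w) <=
  1 / Dh (Kf j t w) * \1_(YRk j (Kf j t w)) w.
Proof.
move=> jt; rewrite /YRk (take_Kf _ _ _ _ _ (ltnW jt)) indicE.
case: (boolP (rej P alpha lambda tau j w)) => r.
  have hm : w \in [set w0 | P j w0 <= alpha j (history j w)] by apply/mem_set.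
  rewrite hm mulr1 /=; apply: inv_le; first exact: Dh0.
  rewrite /Dh ler_nat geq_max leq_maxr andbT.
  apply: leq_trans (leq_maxl _ _).
  exact: (Rn_K t ma ml mt (order j w) r).
rewrite mul0r; apply: mulr_ge0; first by rewrite divr_ge0 // ltW // Dh0.
by case: (_ \in _).
Qed.

Lemma RHS_eq j t w : (j < t)%N ->
  c2 j (Kf j t w) * \1_(YGk j (Kf j t w)) w = G j w / Dh (history t w).
Proof.
move=> jt; rewrite /YGk /c2 (take_Kf _ _ _ _ _ (ltnW jt)) G_eq /YG !indicE.
case: (boolP (lambda j (history j w) < P j w <= tau j (history j w))) => h.
  have hm : w \in [set w0 | lambda j (history j w) < P j w0 <= tau j (history j w)]
    by apply/mem_set.
  rewrite hm mulr1 mulr1 /Kf K_mid //.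
  by case/andP: (order j w).
have nY : ~ [set w0 | lambda j (history j w) < P j w0 <= tau j (history j w)] w.
  by move=> /= H; move: h; rewrite H.
by rewrite (memNset nY) mulr0 mulr0 mul0r.
Qed.


Lemma meas_Rect j t k : measurable (Rect P alpha lambda tau j t k).
Proof.
apply: bigcap_measurableType => s _.
by have := mP s measurableT (measurable_Bs alpha lambda tau s k); rewrite setTI.
Qed.

Lemma term_B j t (k : t.-tuple trip) : (j < t)%N -> null j ->
  1 / Dh k * pr (YRk j k `&` [set w | Kf j t w = k]) <=
  c2 j k * pr (YGk j k `&` [set w | Kf j t w = k]).
Proof.
move=> jt nj.
case: (pselect (exists w, Kf j t w = k)) => [[w0 hw0]|nw]; last first.
  rewrite (_ : [set w | Kf j t w = k] = set0) ?setI0 ?pr0 ?mulr0 //.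
  by apply/seteqP; split => // w /= hw; apply: nw; exists w.
have tk : take j k = history j w0 by rewrite -hw0 (take_Kf _ _ _ _ _ (ltnW jt)).
have sj : size (take j k) = j by rewrite size_takel // size_tuple ltnW.
case: (range sj) => /andP[a0 a1] /andP[l0 l1] /andP[t0 t1].
have := order j w0; rewrite /alpha_at /lambda_at /tau_at -tk => /andP[al lt].
rewrite /Kf (histf_set _ _ _ _ _ _ (size_tuple k)); case: ifP => _; last first.
  by rewrite !setI0 pr0 !mulr0.
have mR := meas_Rect j t k.
have ind (B : set R) : measurable B -> pr (P j @^-1` B `&` Rect P alpha lambda tau j t k) =
   pr (P j @^-1` B) * pr (Rect P alpha lambda tau j t k).
  move=> mB; apply: EFin_inj; rewrite EFinM -!prE //.
  - exact: (indep alpha lambda tau t k nj mB Hind mP).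
  - by have := mP j measurableT mB; rewrite setTI.
  - by apply: measurableI => //; have := mP j measurableT mB; rewrite setTI.
have e1 : pr (YRk j k `&` Rect P alpha lambda tau j t k) =
    pr (YRk j k) * pr (Rect P alpha lambda tau j t k).
  exact: (ind _ (measurable_le_eq (alpha j (take j k)) true)).
have mmid : measurable [set x : R | lambda j (take j k) < x <= tau j (take j k)].
  rewrite (_ : [set x | _] = `]lambda j (take j k), tau j (take j k)]%classic).
    exact: measurable_itv.
  by apply/seteqP; split => x /=; rewrite in_itv.
have e2 : pr (YGk j k `&` Rect P alpha lambda tau j t k) =
    pr (YGk j k) * pr (Rect P alpha lambda tau j t k).
  exact: (ind _ mmid).
rewrite e1 e2 !mulrA; apply: ler_wpM2r; first exact: pr_ge0.
have e : c2 j k * pr (YGk j k) = 1 / Dh k * (cG j (take j k) * pr (YGk j k)).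
  by rewrite /c2 div1r mulrA [(Dh k)^-1 * _]mulrC.
rewrite e; apply: ler_wpM2l; first by rewrite divr_ge0 // ltW // Dh0.
exact: (margA mP Hc).
Qed.


Lemma per_j j t : (j < t)%N -> null j ->
  ('E_Pr[fun w => ((rej P alpha lambda tau j w)%:R / Dh (history t w))%R] <=
   'E_Pr[fun w => (G j w / Dh (history t w))%R])%E.
Proof.
move=> jt nj.
have mRk k : measurable (YRk j k) by exact: meas_P_le.
have mGk k : measurable (YGk j k) by exact: meas_P_mid.
have sK w : size (Kf j t w) = t by exact: size_histf.
have mKk k : measurable [set w | Kf j t w = k] by exact: mK.
apply: (@le_trans _ _ ('E_Pr[fun w => (1 / Dh (Kf j t w) * \1_(YRk j (Kf j t w)) w)%R])%E).
  apply: expectation_le.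
  - rewrite (_ : (fun w => _) = fun w =>
        (fun h => (((nth tdef h j).1.1)%:R : R) / Dh h) (history t w)).
      apply: (@meas_fun1 _ _ _ t (history t) (fun h => (((nth tdef h j).1.1)%:R : R) / Dh h)); [exact: size_history | move=> k; exact: meas_history].
    by apply/funext => w /=; rewrite nth_history.
  - exact: (@meas_fun2 _ _ _ t (Kf j t) (fun k => 1 / Dh k) (YRk j) sK mRk mKk).
  - by move=> w; rewrite divr_ge0 // ltW // Dh0.
  - move=> w; apply: mulr_ge0; first by rewrite divr_ge0 // ltW // Dh0.
    by rewrite indicE; case: (_ \in _).
  by apply: aeW => w; exact: LHS_le.
rewrite (@expect_fun2 _ _ _ Pr t (Kf j t) (fun k => 1 / Dh k) (YRk j)) //; last first.
  by move=> w; rewrite divr_ge0 // ltW // Dh0.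
rewrite (_ : (fun w => _) = fun w => c2 j (Kf j t w) * \1_(YGk j (Kf j t w)) w); last first.
  by apply/funext => w; rewrite RHS_eq.
rewrite (@expect_fun2 _ _ _ Pr t (Kf j t) (c2 j) (YGk j)) //; last first.
  move=> w; rewrite /c2 (take_Kf _ _ _ _ _ (ltnW jt)).
  by apply: divr_ge0; [exact: cG_ge0 | rewrite ltW // Dh0].
rewrite lee_fin; apply: ler_sum => k _; exact: term_B.
Qed.


Lemma mrejD j t : (j < t)%N ->
  measurable_fun setT (fun w => ((rej P alpha lambda tau j w)%:R / Dh (history t w))%R).
Proof.
move=> jt; rewrite (_ : (fun w => _) = fun w =>
        (fun h => (((nth tdef h j).1.1)%:R : R) / Dh h) (history t w)).
  apply: (@meas_fun1 _ _ _ t (history t) (fun h => (((nth tdef h j).1.1)%:R : R) / Dh h));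
    [exact: size_history | move=> k; exact: meas_history].
by apply/funext => w /=; rewrite nth_history.
Qed.

Lemma mGD j t : measurable_fun setT (fun w => (G j w / Dh (history t w))%R).
Proof.
apply: measurable_funM; first exact: mG.
apply: (@meas_fun1 _ _ _ t (history t) (fun h => (Dh h)^-1));
  [exact: size_history | move=> k; exact: meas_history].
Qed.

Lemma GD_ge0 j t w : 0 <= G j w / Dh (history t w).
Proof. by apply: divr_ge0; [exact: G_ge0 | rewrite ltW // Dh0]. Qed.

Lemma partB : 0 < a ->
  (forall t, {ae Pr, forall w, FDP_ADDIS P alpha lambda tau t w <= a}) ->
  forall t, (FDR P alpha lambda tau Pr null t <= a%:E)%E.
Proof.
move=> a0 Hfdp t; rewrite /FDR.
rewrite (_ : (fun w => _) = fun w =>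
   (\sum_(j < t | null j) ((rej P alpha lambda tau j w)%:R / Dh (history t w)))%R); last first.
  by apply/funext => w; rewrite /num_false_rej natr_sum mulr_suml num_rej_Rn.
rewrite expect_sumf; last first.
  - by move=> j w; rewrite divr_ge0 // ltW // Dh0.
  - by move=> j; exact: mrejD.
apply: (@le_trans _ _ (\sum_(j < t | null j) 'E_Pr[fun w => (G j w / Dh (history t w))%R])%E).
  by apply: lee_sum => j nj; exact: per_j.
apply: (@le_trans _ _ (\sum_(j < t) 'E_Pr[fun w => (G j w / Dh (history t w))%R])%E).
  rewrite big_mkcond /=; apply: lee_sum => j _; case: (null j) => //.
  by apply: expectation_ge0 => w; exact: GD_ge0.
rewrite -expect_sumf; last first.
  - by move=> j w; exact: GD_ge0.
  - by move=> j; exact: mGD.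
rewrite -(expectation_cst Pr a); apply: expectation_le.
- by apply: measurable_sum => j; exact: mGD.
- exact: measurable_cst.
- by move=> w; apply: sumr_ge0 => j _; exact: GD_ge0.
- by move=> w; exact: ltW.
apply: filterS (Hfdp t) => w /= H.
by move: H; rewrite /FDP_ADDIS num_rej_Rn mulr_suml.
Qed.

End PartB2.

Unset Implicit Arguments.
Set Strict Implicit.

Theorem theorem1 (d : measure_display) (T : measurableType d) (R : realType)
  (Pr : probability T R) (P : nat -> T -> R) (null : nat -> bool)
  (alpha lambda tau : nat -> hist -> R) (a : R) :
  0 < a < 1 ->
  (forall j, measurable_fun setT (P j)) ->
  (forall j w, 0 <= P j w <= 1) ->
  (forall t h, size h = t ->
     [/\ 0 <= alpha t h <= 1, 0 <= lambda t h <= 1 & 0 <= tau t h <= 1]) ->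
  (forall j w, alpha_at P alpha lambda tau j w <= lambda_at P alpha lambda tau j w
             < tau_at P alpha lambda tau j w) ->
  (forall t, {ae Pr, forall w, FDP_ADDIS P alpha lambda tau t w <= a}) ->
  (cond_unif_conservative P alpha lambda tau Pr null ->
     forall t, mFDR P alpha lambda tau Pr null t <= a)
  /\
  (cond_unif_conservative P alpha lambda tau Pr null ->
   nulls_independent P Pr null ->
   monotone_past alpha -> monotone_past lambda ->
   monotone_past (fun t h => 1 - tau t h) ->
     forall t, (FDR P alpha lambda tau Pr null t <= a%:E)%E).
Proof.
move=> /andP[a0 a1] mP P01 range order Hfdp; split.
  by move=> Hc t; exact: (partA mP range order Hc Hfdp a0 t).
move=> Hc Hind ma ml mt t.
exact: (partB mP range order Hc Hind ma ml mt a0 Hfdp t).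
Qed.
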